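(* Let $\Pi$ be a ground HEX-program, $\mathbf{A}$ an interpretation, and $U$ an unfounded set of $\Pi$ with respect to $\mathbf{A}$. Let $C\subseteq U$ be a cut of $U$, i.e. (i) $b\not\rightarrow_e a$ for all $a\in C$ and $b\in U$, and (ii) $b\not\rightarrow a$ and $a\not\rightarrow b$ for all $a\in C$ and $b\in U\setminus C$. Then $U\setminus C$ is an unfounded set of $\Pi$ with respect to $\mathbf{A}$.
   Context: Ground HEX-programs. A ground ordinary atom is $p(c_1,\dots,c_\ell)$. A ground external atom is $\&g[\vec p](\vec c)$ with input list $\vec p$ (predicate names or constants) and output constants $\vec c$. A ground HEX-program is a finite set of rules $r$: $a_1\lor\dots\lor a_k\leftarrow b_1,\dots,b_m,\mathrm{not}\,b_{m+1},\dots,\mathrm{not}\,b_n$, with ordinary ground head atoms and each $b_j$ an ordinary or external ground atom; $H(r)=\{a_1,\dots,a_k\}$, $B^+(r)=\{b_1,\dots,b_m\}$, $B^-(r)=\{b_{m+1},\dots,b_n\}$, $B(r)$ the set of body literals. Interpretations: complete consistent sets $\mathbf{A}$ of signed literals $\mathbf{T}a$/$\mathbf{F}a$. $\mathbf{A}\models a$ (ordinary) iff $\mathbf{T}a\in\mathbf{A}$; $\mathbf{A}\models\&g[\vec p](\vec c)$ iff the Boolean oracle $f_{\&g}(\mathbf{A},\vec p,\vec c)=1$, whose value depends only on the extensions in $\mathbf{A}$ of the input predicates in $\vec p$; $\mathbf{A}\models\mathrm{not}\,b$ iff $\mathbf{A}\not\models b$. Unfounded sets: for a set $X$ of ordinary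 ground atoms appearing in $\Pi$, $\mathbf{A}\,\dot\cup\neg.\,X=(\mathbf{A}\setminus\{\mathbf{T}a\mid a\in X\})\cup\{\mathbf{F}a\mid a\in X\}$; $X$ is an unfounded set of $\Pi$ w.r.t. $\mathbf{A}$ iff for every $r\in\Pi$ with $H(r)\cap X\neq\emptyset$: (i) some literal of $B(r)$ is false w.r.t. $\mathbf{A}$, or (ii) some literal of $B(r)$ is false w.r.t. $\mathbf{A}\,\dot\cup\neg.\,X$, or (iii) some atom of $H(r)\setminus X$ is true w.r.t. $\mathbf{A}$. Dependencies: $x\rightarrow y$ iff some $r\in\Pi$ has $x\in H(r)$, $y\in B^+(r)$; $x\rightarrow_e y$ iff some $r\in\Pi$ has $x\in H(r)$ and an external atom $\&g[q_1,\dots,q_n](\vec e)\in B^+(r)\cup B^-(r)$ with some $q_i$ equal to the predicate of $y$. *)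

(* Defs.v *)
From mathcomp Require Import all_boot.
From Stdlib Require List.
Set Implicit Arguments. Unset Strict Implicit. Unset Printing Implicit Defensive.

Section Hex.
(* Pr: predicate names, Cn: constants, Gn: external predicate names *)
Variables (Pr Cn Gn : eqType).

Definition oatom : eqType := (Pr * seq Cn)%type.
Definition pred_of (a : oatom) : Pr := a.1.

(* ground external atom &g[p_1..p_n](c_1..c_m); inputs are predicate names or constants *)
Record eatom := EAtom { ename : Gn; einp : seq (Pr + Cn); eout : seq Cn }.

Inductive batom := BO of oatom | BE of eatom.

(* rule  a_1 v ... v a_k <- b_1,...,b_m, not b_{m+1},..., not b_n *)
Record rule := Rule { head : seq oatom; bpos : seq batom; bneg : seq batom }.
Definition program := seq rule.

(* interpretation: complete consistent set of signed literals, i.e. a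
   truth assignment to the ordinary ground atoms (T a iff A a = true) *)
Definition interp := oatom -> bool.

Definition oracle := Gn -> interp -> seq (Pr + Cn) -> seq Cn -> bool.

Definition oracle_ok (f : oracle) : Prop :=
  forall g (A A' : interp) ps cs,
    (forall a : oatom, inl (pred_of a) \in ps -> A a = A' a) ->
    f g A ps cs = f g A' ps cs.

Variable f : oracle.

Definition sat_b (A : interp) (b : batom) : bool :=
  match b with
  | BO a => A a
  | BE e => f (ename e) A (einp e) (eout e)
  end.

Definition body_false (A : interp) (r : rule) : bool :=
  has (fun b => ~~ sat_b A b) (bpos r) || has (fun b => sat_b A b) (bneg r).

Definition unf_upd (A : interp) (X : oatom -> bool) : interp :=
  fun a => A a && ~~ X a.

Definition batom_oatoms (b : batom) : seq oatom :=
  match b with BO a => [:: a] | BE _ => [::] end.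

Definition rule_atoms (r : rule) : seq oatom :=
  head r ++ flatten (map batom_oatoms (bpos r)) ++ flatten (map batom_oatoms (bneg r)).
Definition prog_atoms (P : program) : seq oatom := flatten (map rule_atoms P).

Definition unfounded (P : program) (A : interp) (X : oatom -> bool) : Prop :=
  (forall a, X a -> a \in prog_atoms P) /\
  forall r, List.In r P -> has X (head r) ->
    [|| body_false A r, body_false (unf_upd A X) r
      | has (fun a => ~~ X a && A a) (head r)].

Definition dep (P : program) (x y : oatom) : Prop :=
  exists2 r, List.In r P & (x \in head r) /\ List.In (BO y) (bpos r).

Definition edep (P : program) (x y : oatom) : Prop :=
  exists2 r, List.In r P & (x \in head r) /\
    exists e, (List.In (BE e) (bpos r) \/ List.In (BE e) (bneg r)) /\ (inl (pred_of y) \in einp e).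

Definition is_cut (P : program) (U C : oatom -> bool) : Prop :=
  (forall a, C a -> U a) /\
  (forall a b, C a -> U b -> ~ edep P b a) /\
  (forall a b, C a -> U b -> ~~ C b -> ~ dep P b a /\ ~ dep P a b).

End Hex.

(* Main.v *)
Require Import Defs.
From mathcomp Require Import all_boot.
From Stdlib Require List.
Set Implicit Arguments.

Lemma my_hasIn (T : Type) (p : T -> bool) (s : seq T) :
  has p s -> exists x, List.In x s /\ p x.
Proof.
elim: s => //= x s IH /orP [H|/IH [y [Hy Hp]]].
- by exists x; split; [left|].
- by exists y; split; [right|].
Qed.

Lemma my_inHas (T : Type) (p : T -> bool) (s : seq T) x :
  List.In x s -> p x -> has p s.
Proof.
elim: s => //= y s IH [<-|Hx] Hp; first by rewrite Hp.
by rewrite IH ?orbT.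
Qed.

Arguments my_hasIn {T p s}.
Arguments my_inHas {T p s x}.

Theorem lemma1 (Pr Cn Gn : eqType) (f : oracle Pr Cn Gn) (Hf : oracle_ok f)
  (P : program Pr Cn Gn) (A : interp Pr Cn) (U C : oatom Pr Cn -> bool) :
  unfounded f P A U -> is_cut P U C ->
  unfounded f P A (fun a => U a && ~~ C a).
Proof.
move=> [HU1 HU2] [HC1 [HC2 HC3]]; split.
  by move=> a /andP [Ha _]; apply: HU1.
move=> r Hr Hh.
have [b [Hb /andP [Ub nCb]]] := my_hasIn Hh.
have Hbh : b \in Defs.head r.
  move: Hb; elim: (Defs.head r) => //= x s IH [->|H]; first by rewrite inE eqxx.
  by rewrite inE IH ?orbT.
have HhU : has U (Defs.head r) by apply: (my_inHas Hb).
have := HU2 r Hr HhU.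
case/or3P => [->//|H2|H3]; last first.
  have [a [Ha /andP [nUa Aa]]] := my_hasIn H3.
  apply/or3P; apply: Or33; apply: (my_inHas Ha).
  by rewrite Aa andbT negb_and nUa.
have Hext : forall e, (List.In (BE e) (bpos r) \/ List.In (BE e) (bneg r)) ->
    sat_b f (unf_upd A U) (BE e) = sat_b f (unf_upd A (fun a => U a && ~~ C a)) (BE e).
  move=> e He /=; apply: Hf => a Ha.
  rewrite /unf_upd.
  have nCa : ~~ C a.
    apply/negP => Ca; apply: (HC2 a b Ca Ub).
    by exists r => //; split => //; exists e; split.
  by rewrite (negbTE nCa) andbT.
move: H2; rewrite /body_false => /orP [H|H].
- have [l [Hl Hs]] := my_hasIn H.
  case: l Hl Hs => [y|e] Hl Hs.
  + move: Hs; rewrite /= /unf_upd negb_and negbK => /orP [nAy|Uy].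
    * by apply/or3P; apply: Or31; rewrite (my_inHas (p:=fun b => ~~ sat_b f A b) Hl).
    * case Cy: (C y).
        by exfalso; have [Hd _] := HC3 y b Cy Ub nCb; apply: Hd; exists r.
      apply/or3P; apply: Or32; rewrite (my_inHas (p:=fun b => ~~ sat_b f _ b) Hl) //=.
      by rewrite /unf_upd Uy Cy /= andbF.
  + apply/or3P; apply: Or32; rewrite (my_inHas (p:=fun b => ~~ sat_b f _ b) Hl) //.
    by rewrite -Hext; [|left].
- have [l [Hl Hs]] := my_hasIn H.
  apply/or3P; apply: Or32; apply/orP; right.
  rewrite (my_inHas (p:=fun b => sat_b f _ b) Hl) //.
  case: l Hl Hs => [y|e] Hl Hs.
  + move: Hs; rewrite /= /unf_upd => /andP [-> nUy].
    by rewrite negb_and nUy.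
  + by rewrite -Hext; [|right].
Qed.
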